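(* Let $A, B, A', B'$ be countable sets, let $\mu_1 \in \mathcal{D}(A)$, $\mu_2 \in \mathcal{D}(B)$, and let $f \colon A \to \mathcal{D}(A')$, $g \colon B \to \mathcal{D}(B')$. Let $\Xi \subseteq A$ be a predicate, let $\Phi_1, \Phi_2 \subseteq A \times B$ and $\Psi \subseteq A' \times B'$ be relations, and assume $\Phi_1, \Phi_2$ are disjoint in the sense that for all $a, a' \in A$ and $b \in B$, if $a \in \Xi$ and $a' \notin \Xi$ then $(a,b) \notin \Phi_1$ or $(a',b) \notin \Phi_2$. Let $\varepsilon_1, \varepsilon_2, \varepsilon_1', \varepsilon_2', \delta_1, \delta_2, \delta_1', \delta_2' \geq 0$ be real numbers, and assume: (i) $\mu_1 \sim_{\varepsilon_1,\delta_1} \mu_2 : \Phi_1$; (ii) $\mu_1 \sim_{\varepsilon_2,\delta_2} \mu_2 : \Phi_2$; (iii) for all $a \in A$, $b \in B$ with $a \in \Xi$ and $(a,b) \in \Phi_1$, we have $f(a) \sim_{\varepsilon_1',\delta_1'} g(b) : \Psi$; (iv) for all $a \in A$, $b \in B$ with $a \notin \Xi$ and $(a,b) \in \Phi_2$, we have $f(a) \sim_{\varepsilon_2',\delta_2'} g(b) : \Psi$. Then $(\mu_1 \mathbin{>\!\!>\!\!=} f) \sim_{\varepsilon,\delta} (\mu_2 \mathbin{>\!\!>\!\!=} g) : \Psi$, where $\varepsilon = \max(\varepsilon_1 + \varepsilon_1', \varepsilon_2 + \varepsilon_2')$ and $\delta = \delta_1 + \delta_2 + \max(\delta_1', \delt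a_2')$.
   Context: For a countable set $A$, a (sub)distribution on $A$ is a function $\mu \colon A \to [0,1]$ with $\sum_{a \in A} \mu(a) \leq 1$; $\mathcal{D}(A)$ denotes the set of such. For $\mu \in \mathcal{D}(A)$ and $h \colon A \to \mathcal{D}(B)$, the bind is $(\mu \mathbin{>\!\!>\!\!=} h)(b) = \sum_{a \in A} \mu(a)\, h(a)(b)$. For a function $F \colon A \to [0,1]$, its expectation is $\mathbb{E}_\mu[F] = \sum_{a \in A} \mu(a) F(a)$. Approximate coupling: for countable $A, B$, a relation $\Phi \subseteq A \times B$, reals $\varepsilon, \delta \geq 0$, and $\mu_1 \in \mathcal{D}(A)$, $\mu_2 \in \mathcal{D}(B)$, we write $\mu_1 \sim_{\varepsilon,\delta} \mu_2 : \Phi$ (an $(\varepsilon,\delta)$-approximate $\Phi$-coupling exists) if for all functions $F \colon A \to [0,1]$ and $G \colon B \to [0,1]$ such that $F(a) \leq G(b)$ for all $(a,b) \in \Phi$, we have $\mathbb{E}_{\mu_1}[F] \leq e^{\varepsilon} \cdot \mathbb{E}_{\mu_2}[G] + \delta$. *)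

(* Defs.v *)
From HB Require Import structures.
From mathcomp Require Import all_boot all_order all_algebra.
From mathcomp Require Import all_classical all_reals all_analysis.
Set Implicit Arguments. Unset Strict Implicit. Unset Printing Implicit Defensive.
Import Order.TTheory GRing.Theory Num.Theory.
Local Open Scope classical_set_scope.
Local Open Scope ring_scope.

Section Defs.
Variable R : realType.

Definition is_subdistr (A : countType) (mu : A -> R) : Prop :=
  (forall a, 0 <= mu a <= 1) /\ (\esum_(a in [set: A]) (mu a)%:E <= 1)%E.

Definition expect (A : countType) (mu : A -> R) (F : A -> R) : \bar R :=
  \esum_(a in [set: A]) (mu a * F a)%:E.

(* bind: (mu >>= h)(b) = sum_a mu(a) h(a)(b)  (finite, <= 1, for subdistributions) *)
Definition dbind (A B : countType) (mu : A -> R) (h : A -> B -> R) : B -> R :=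
  fun b => fine (\esum_(a in [set: A]) (mu a * h a b)%:E).

Definition approx_coupling (A B : countType) (Phi : A -> B -> Prop)
    (eps delta : R) (mu1 : A -> R) (mu2 : B -> R) : Prop :=
  forall (F : A -> R) (G : B -> R),
    (forall a, 0 <= F a <= 1) -> (forall b, 0 <= G b <= 1) ->
    (forall a b, Phi a b -> F a <= G b) ->
    (expect mu1 F <= (expR eps)%:E * expect mu2 G + delta%:E)%E.
End Defs.

(* Main.v *)
Require Import Defs.
From HB Require Import structures.
From mathcomp Require Import all_boot all_order all_algebra.
From mathcomp Require Import all_classical all_reals all_analysis.
From mathcomp Require Import lra ring.
Import Order.TTheory GRing.Theory Num.Theory.
Local Open Scope ring_scope.

Local Open Scope classical_set_scope.
Local Open Scope ring_scope.

Lemma esumZl (R : realType) (T : choiceType) (c : R) (a : T -> \bar R) :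
  0 <= c -> (forall i, 0 <= a i)%E ->
  (\esum_(i in [set: T]) (c%:E * a i) = c%:E * \esum_(i in [set: T]) a i)%E.
Proof.
move=> c0 a0.
have le1 : forall (d : R) (b : T -> \bar R), 0 <= d -> (forall i, 0 <= b i)%E ->
    (\esum_(i in [set: T]) (d%:E * b i) <= d%:E * \esum_(i in [set: T]) b i)%E.
  move=> d b d0 b0; apply: ge_ereal_sup => _ [X XS <-] /=.
  rewrite -ge0_mule_fsumr //; apply: lee_wpmul2l; first by rewrite lee_fin.
  by apply: ereal_sup_ubound; exists X.
apply/eqP; rewrite eq_le le1 //=.
have [->|cpos] := eqVneq c 0.
  by rewrite mul0e esum_ge0 // => i _; rewrite mul0e.
have c0' : 0 < c by rewrite lt_def cpos c0.
have := le1 c^-1 (fun i => (c%:E * a i)%E) _ _.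
rewrite invr_ge0 c0 => /(_ isT).
have h : forall i, (0 <= c%:E * a i)%E by move=> i; rewrite mule_ge0 // lee_fin.
move=> /(_ h).
rewrite (eq_esum (b := a)); last first.
  by move=> i _; rewrite muleA -EFinM mulVf // mul1e.
move=> H; rewrite -[X in (_ <= X)%E]mul1e -(mulfV cpos) EFinM -muleA.
by apply: lee_wpmul2l => //; rewrite lee_fin.
Qed.

Lemma esum_swap (R : realType) (T1 T2 : choiceType) (a : T1 -> T2 -> \bar R) :
  (forall i j, 0 <= a i j)%E ->
  \esum_(i in [set: T1]) \esum_(j in [set: T2]) a i j =
  \esum_(j in [set: T2]) \esum_(i in [set: T1]) a i j.
Proof.
move=> a0; rewrite esum_esum // esum_esum //.
rewrite (@reindex_esum _ _ _ ([set: T2] `*`` fun _ => [set: T1])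
   ([set: T1] `*`` fun _ => [set: T2]) (fun k => (k.2, k.1))) //.
split.
- by move=> k _.
- by move=> [x y] [x' y'] _ _ /= [-> ->].
- by move=> [x y] _; exists (y, x).
Qed.

Lemma expect01 (R : realType) (A : countType) (mu : A -> R) (F : A -> R) :
  is_subdistr mu -> (forall x, 0 <= F x <= 1) ->
  (0 <= expect mu F)%E /\ (expect mu F <= 1)%E.
Proof.
move=> [m01 msum] F01; split.
  apply: esum_ge0 => a _; rewrite lee_fin mulr_ge0 //.
    by case/andP: (m01 a). by case/andP: (F01 a).
apply: le_trans msum; apply: le_esum => a _; rewrite lee_fin.
case/andP: (m01 a) => ? ?; case/andP: (F01 a) => ? ?.
by rewrite ler_piMr.
Qed.

Lemma expect_fin (R : realType) (A : countType) (mu : A -> R) (F : A -> R) :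
  is_subdistr mu -> (forall x, 0 <= F x <= 1) ->
  expect mu F = (fine (expect mu F))%:E /\ 0 <= fine (expect mu F) <= 1.
Proof.
move=> smu F01; have [h0 h1] := expect01 _ _ _ _ smu F01.
have fin : expect mu F \is a fin_num.
  by rewrite ge0_fin_numE // (le_lt_trans h1) // ltry.
split; first by rewrite fineK.
by rewrite -lee_fin -(lee_fin _ 1) fineK // h0 h1.
Qed.

Lemma expect_bind (R : realType) (A A' : countType) (mu : A -> R)
  (h : A -> A' -> R) (F : A' -> R) :
  is_subdistr mu -> (forall a, is_subdistr (h a)) -> (forall x, 0 <= F x <= 1) ->
  expect (dbind mu h) F =
  (\esum_(a in [set: A]) (mu a * fine (expect (h a) F))%:E)%E.
Proof.
move=> smu sh F01.
have m0 a : 0 <= mu a by case: smu => /(_ a) /andP[].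
have h0 a x : 0 <= h a x by case: (sh a) => /(_ x) /andP[].
have F0 x : 0 <= F x by case/andP: (F01 x).
rewrite /expect /dbind.
transitivity (\esum_(x in [set: A']) \esum_(a in [set: A])
                 (mu a * (h a x * F x))%:E)%E.
  apply: eq_esum => x _.
  have [E _] := expect_fin _ _ _ _ smu (fun a => proj1 (sh a) x).
  rewrite EFinM -[X in (X * _)%E]E /expect muleC -esumZl //; last first.
    by move=> a; rewrite lee_fin mulr_ge0.
  apply: eq_esum => a _; rewrite -EFinM.
  by rewrite mulrC -mulrA.
rewrite (@esum_swap _ _ _ (fun x a => (mu a * (h a x * F x))%:E)); last by move=> a x; rewrite lee_fin !mulr_ge0.
apply: eq_esum => a _.
have [E _] := expect_fin _ _ _ _ (sh a) F01.
rewrite EFinM -E /expect -esumZl //; last by move=> x; rewrite lee_fin mulr_ge0.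
Qed.

Theorem theorem5p2 (R : realType) (A B A' B' : countType)
  (mu1 : A -> R) (mu2 : B -> R) (f : A -> A' -> R) (g : B -> B' -> R)
  (Xi : A -> Prop) (Phi1 Phi2 : A -> B -> Prop) (Psi : A' -> B' -> Prop)
  (eps1 eps2 eps1' eps2' del1 del2 del1' del2' : R) :
  is_subdistr mu1 -> is_subdistr mu2 ->
  (forall a, is_subdistr (f a)) -> (forall b, is_subdistr (g b)) ->
  (forall a a' b, Xi a -> ~ Xi a' -> ~ Phi1 a b \/ ~ Phi2 a' b) ->
  0 <= eps1 -> 0 <= eps2 -> 0 <= eps1' -> 0 <= eps2' ->
  0 <= del1 -> 0 <= del2 -> 0 <= del1' -> 0 <= del2' ->
  approx_coupling Phi1 eps1 del1 mu1 mu2 ->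
  approx_coupling Phi2 eps2 del2 mu1 mu2 ->
  (forall a b, Xi a -> Phi1 a b -> approx_coupling Psi eps1' del1' (f a) (g b)) ->
  (forall a b, ~ Xi a -> Phi2 a b -> approx_coupling Psi eps2' del2' (f a) (g b)) ->
  approx_coupling Psi (Num.max (eps1 + eps1') (eps2 + eps2'))
    (del1 + del2 + Num.max del1' del2') (dbind mu1 f) (dbind mu2 g).
Proof.
move=> smu1 smu2 sf sg disj e1 e2 e1' e2' d1 d2 d1' d2' C1 C2 C3 C4.
move=> F G F01 G01 FG.
rewrite (expect_bind _ _ _ _ _ _ smu1 sf F01) (expect_bind _ _ _ _ _ _ smu2 sg G01).
set Fp := fun a => fine (expect (f a) F).
set Gp := fun b => fine (expect (g b) G).
have Fp01 a : 0 <= Fp a <= 1 by have [_ ->] := expect_fin _ _ _ _ (sf a) F01.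
have Gp01 b : 0 <= Gp b <= 1 by have [_ ->] := expect_fin _ _ _ _ (sg b) G01.
have EF a : expect (f a) F = (Fp a)%:E by have [-> _] := expect_fin _ _ _ _ (sf a) F01.
have EG b : expect (g b) G = (Gp b)%:E by have [-> _] := expect_fin _ _ _ _ (sg b) G01.
have m10 a : 0 <= mu1 a by case: smu1 => /(_ a) /andP[].
have m20 b : 0 <= mu2 b by case: smu2 => /(_ b) /andP[].
have P1 a b : Xi a -> Phi1 a b -> Fp a <= expR eps1' * Gp b + del1'.
  move=> xa p; have := C3 a b xa p F G F01 G01 FG.
  by rewrite EF EG -EFinM -EFinD lee_fin.
have P2 a b : ~ Xi a -> Phi2 a b -> Fp a <= expR eps2' * Gp b + del2'.
  move=> xa p; have := C4 a b xa p F G F01 G01 FG.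
  by rewrite EF EG -EFinM -EFinD lee_fin.
pose B1 b := exists a, Xi a /\ Phi1 a b.
pose H1 a := if `[< Xi a >] then Num.max 0 (Fp a - del1') else 0.
pose K1 b := if `[< B1 b >] then Num.min 1 (expR eps1' * Gp b) else 0.
pose H2 a := if `[< Xi a >] then 0 else Num.max 0 (Fp a - del2').
pose K2 b := if `[< B1 b >] then 0 else Num.min 1 (expR eps2' * Gp b).
have ee1 := expR_ge0 eps1'; have ee2 := expR_ge0 eps2'.
have H1r a : 0 <= H1 a <= 1.
  rewrite /H1; case: asboolP => _; last by rewrite lexx ler01.
  have := Fp01 a.
  rewrite le_max ge_max lexx /= => /andP[? ?]; apply/andP; split => //; lra.
have H2r a : 0 <= H2 a <= 1.
  rewrite /H2; case: asboolP => _; first by rewrite lexx ler01.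
  have := Fp01 a.
  rewrite le_max ge_max lexx /= => /andP[? ?]; apply/andP; split => //; lra.
have K1r b : 0 <= K1 b <= 1.
  rewrite /K1; case: asboolP => _; last by rewrite lexx ler01.
  have := Gp01 b.
  rewrite le_min ge_min lexx /= andbT ler01 => /andP[? ?]; by rewrite mulr_ge0.
have K2r b : 0 <= K2 b <= 1.
  rewrite /K2; case: asboolP => _; first by rewrite lexx ler01.
  have := Gp01 b.
  rewrite le_min ge_min lexx /= andbT ler01 => /andP[? ?]; by rewrite mulr_ge0.
have c1 a b : Phi1 a b -> H1 a <= K1 b.
  move=> p; rewrite /H1 /K1; case: asboolP => xa; last by case/andP: (K1r b).
  rewrite asboolT; last by exists a.
  have := P1 a b xa p; have := Fp01 a; have := Gp01 b.
  move=> /andP[g0 g1] /andP[f0 f1] h.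
  have eg : 0 <= expR eps1' * Gp b by rewrite mulr_ge0.
  rewrite ge_max !le_min; apply/andP; split; apply/andP; split => //; lra.
have c2 a b : Phi2 a b -> H2 a <= K2 b.
  move=> p; rewrite /H2 /K2; case: asboolP => xa; first by case/andP: (K2r b).
  case: asboolP => hb.
    by case: hb => a0 [x0 p0]; case: (disj a0 a b x0 xa).
  have := P2 a b xa p; have := Fp01 a; have := Gp01 b.
  move=> /andP[g0 g1] /andP[f0 f1] h.
  have eg : 0 <= expR eps2' * Gp b by rewrite mulr_ge0.
  rewrite ge_max !le_min; apply/andP; split; apply/andP; split => //; lra.
have I1 := C1 H1 K1 H1r K1r c1.
have I2 := C2 H2 K2 H2r K2r c2.
set ee := Num.max (eps1 + eps1') (eps2 + eps2').
set dd := Num.max del1' del2'.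
have dd0 : 0 <= dd by rewrite le_max d1'.
have L : (\esum_(a in [set: A]) (mu1 a * Fp a)%:E <=
          expect mu1 H1 + expect mu1 H2 + dd%:E)%E.
  apply: (@le_trans _ _ (\esum_(a in [set: A])
     ((mu1 a * H1 a)%:E + (mu1 a * H2 a)%:E + dd%:E * (mu1 a)%:E))%E).
    apply: le_esum => a _; rewrite -EFinM -!EFinD lee_fin.
    have : Fp a <= H1 a + H2 a + dd.
      rewrite /H1 /H2; case: asboolP => _.
        have : Num.max 0 (Fp a - del1') >= Fp a - del1' by rewrite le_max lexx orbT.
        have : dd >= del1' by rewrite le_max lexx.
        lra.
      have : Num.max 0 (Fp a - del2') >= Fp a - del2' by rewrite le_max lexx orbT.
      have : dd >= del2' by rewrite le_max lexx orbT.
      lra.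
    move=> h; rewrite [dd * _]mulrC -!mulrDr; exact: ler_wpM2l.
  rewrite esumD; last 2 first.
  - by move=> a _; rewrite -EFinD lee_fin addr_ge0 // mulr_ge0 //; case/andP: (H1r a) => //; case/andP: (H2r a).
  - by move=> a _; rewrite lee_fin mulr_ge0.
  rewrite esumD; last 2 first.
  - by move=> a _; rewrite lee_fin mulr_ge0 //; case/andP: (H1r a).
  - by move=> a _; rewrite lee_fin mulr_ge0 //; case/andP: (H2r a).
  rewrite esumZl //.
  apply: leeD => //; rewrite -[X in (_ <= X)%E]mule1; apply: lee_wpmul2l.
    by rewrite lee_fin.
  by case: smu1.
have Rr : ((expR eps1)%:E * expect mu2 K1 + (expR eps2)%:E * expect mu2 K2 <=
   (expR ee)%:E * \esum_(b in [set: B]) (mu2 b * Gp b)%:E)%E.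
  rewrite /expect -!esumZl //; last 3 first.
  - by move=> b; rewrite lee_fin mulr_ge0 //; case/andP: (Gp01 b).
  - by move=> b; rewrite lee_fin mulr_ge0 //; case/andP: (K2r b).
  - by move=> b; rewrite lee_fin mulr_ge0 //; case/andP: (K1r b).
  rewrite -esumD; last 2 first.
  - by move=> b _; rewrite -EFinM lee_fin mulr_ge0 ?expR_ge0 // mulr_ge0 //; case/andP: (K1r b).
  - by move=> b _; rewrite -EFinM lee_fin mulr_ge0 ?expR_ge0 // mulr_ge0 //; case/andP: (K2r b).
  apply: le_esum => b _; rewrite -!EFinM -EFinD lee_fin.
  have g0 : 0 <= Gp b by case/andP: (Gp01 b).
  have mg : 0 <= mu2 b * Gp b by rewrite mulr_ge0.
  rewrite /K1 /K2; case: asboolP => _.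
    rewrite !mulr0 addr0.
    have hm : Num.min 1 (expR eps1' * Gp b) <= expR eps1' * Gp b by rewrite ge_min lexx orbT.
    have he : expR eps1 * expR eps1' <= expR ee by rewrite -expRD ler_expR le_max lexx.
    apply: (@le_trans _ _ (expR eps1 * (mu2 b * (expR eps1' * Gp b)))).
      by rewrite ler_wpM2l ?expR_ge0 // ler_wpM2l.
    have -> : expR eps1 * (mu2 b * (expR eps1' * Gp b)) = (expR eps1 * expR eps1') * (mu2 b * Gp b) by ring.
    exact: ler_wpM2r.
  rewrite !mulr0 add0r.
  have hm : Num.min 1 (expR eps2' * Gp b) <= expR eps2' * Gp b by rewrite ge_min lexx orbT.
  have he : expR eps2 * expR eps2' <= expR ee by rewrite -expRD ler_expR le_max lexx orbT.
  apply: (@le_trans _ _ (expR eps2 * (mu2 b * (expR eps2' * Gp b)))).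
    by rewrite ler_wpM2l ?expR_ge0 // ler_wpM2l.
  have -> : expR eps2 * (mu2 b * (expR eps2' * Gp b)) = (expR eps2 * expR eps2') * (mu2 b * Gp b) by ring.
  exact: ler_wpM2r.
apply: le_trans L _.
apply: le_trans (leeD (leeD I1 I2) (lexx dd%:E)) _.
rewrite !EFinD addeACA [in leRHS]addeA.
by apply: leeD => //; apply: leeD.
Qed.
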